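(* Let $M := \langle X \mid R\rangle$ where $X$ is irredundant, and suppose that $M$ is normalizing, cancellative, and BF. (1) For all $x,y\in X$ there exists $z\in X$ such that $xy =_M zx$. (2) Suppose $X$ is finite and nonempty, $X = \{x_1,\dots,x_n\}$ with $n\in\mathbb{N}^+$. Then for each $a\in\langle X\rangle$ there is a (necessarily unique) word $\nu(a)\in\langle X\rangle$ with $a =_M \nu(a)$, $|a| = |\nu(a)|$, $\nu(a) = x_1^{m_1}\cdots x_n^{m_n}$ with each $m_i\in\mathbb{N}$, and such that $(m_1,\dots,m_n)$ is minimal in the lexicographic order on $\mathbb{N}^n$ among all tuples $(m_1',\dots,m_n')\in\mathbb{N}^n$ with $a =_M x_1^{m_1'}\cdots x_n^{m_n'}$ and $m_1'+\cdots+m_n' = |a|$.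
   Context: For a set $X$, $\langle X\rangle$ is the free monoid on $X$ (identity $1$); $M=\langle X\mid R\rangle$ is the monoid presented by generators $X$ and relations $R\subseteq\langle X\rangle\times\langle X\rangle$. $|a|$ is word length; $a=_M b$ means equal images in $M$. $X$ is irredundant if no proper subset of $X$ generates $M$. $M$ is normalizing if $aM = Ma$ for all $a\in M$; cancellative if $ab=ac$ or $ba=ca$ implies $b=c$. $\mathsf{L}_M(a):=\{|b| : b\in\langle X\rangle,\ b=_M a\}$; $M$ is BF if $\mathsf{L}_M(a)$ is finite for all $a\in\langle X\rangle$. *)

(* Defs.v *)
(* Monoid presentations <X | R>: words are [seq X]
   (the free monoid, concatenation ++, identity [::]), and a =_M b is the
   monoid congruence on [seq X] generated by R. *)
From Stdlib Require List.
From mathcomp Require Import all_boot.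
Set Implicit Arguments. Unset Strict Implicit. Unset Printing Implicit Defensive.

Inductive eqM (X : Type) (R : seq X -> seq X -> Prop) : seq X -> seq X -> Prop :=
  | eqM_rel  : forall p u v q, R u v -> eqM R (p ++ u ++ q) (p ++ v ++ q)
  | eqM_refl : forall a, eqM R a a
  | eqM_sym  : forall a b, eqM R a b -> eqM R b a
  | eqM_trans : forall a b c, eqM R a b -> eqM R b c -> eqM R a c.

Definition generates (X : Type) (R : seq X -> seq X -> Prop) (Y : X -> Prop) : Prop :=
  forall a : seq X, exists b : seq X, (forall y, List.In y b -> Y y) /\ eqM R a b.

Definition irredundant (X : Type) (R : seq X -> seq X -> Prop) : Prop :=
  forall Y : X -> Prop, (exists x, ~ Y x) -> ~ generates R Y.

Definition normalizing (X : Type) (R : seq X -> seq X -> Prop) : Prop :=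
  forall a : seq X,
    (forall b, exists c, eqM R (a ++ b) (c ++ a)) /\
    (forall b, exists c, eqM R (b ++ a) (a ++ c)).

Definition cancellative (X : Type) (R : seq X -> seq X -> Prop) : Prop :=
  forall a b c : seq X,
    (eqM R (a ++ b) (a ++ c) -> eqM R b c) /\
    (eqM R (b ++ a) (c ++ a) -> eqM R b c).

Definition lengths (X : Type) (R : seq X -> seq X -> Prop) (a : seq X) : nat -> Prop :=
  fun k => exists b : seq X, eqM R b a /\ size b = k.

(* BF: L_M(a) is finite for all words a (a set of naturals is finite iff bounded) *)
Definition BF (X : Type) (R : seq X -> seq X -> Prop) : Prop :=
  forall a : seq X, exists N : nat, forall k, lengths R a k -> k <= N.

Definition monoword (X : Type) (n : nat) (x : 'I_n -> X) (m : 'I_n -> nat) : seq X :=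
  flatten [seq nseq (m i) (x i) | i <- enum 'I_n].

Definition lex_le (n : nat) (m m' : 'I_n -> nat) : Prop :=
  (forall i, m i = m' i) \/
  exists i : 'I_n, (forall j : 'I_n, (j < i)%N -> m j = m' j) /\ (m i < m' i)%N.

(* Main.v *)
Require Import Defs.
From Stdlib Require Import Classical.
From mathcomp Require Import all_boot zify.

Lemma nat_min (P : nat -> Prop) : (exists k, P k) -> exists k, P k /\ forall j, P j -> k <= j.
Proof.
move=> [k Pk]; apply: NNPP => H.
have: forall k j, j <= k -> ~ P j.
  elim=> [|k' IH] j hj Pj.
    apply: H; exists j; split => // i _; lia.
  case: (leqP j k') => hjk; first exact: (IH j).
  apply: H; exists j; split => // i Pi; rewrite leqNgt; apply/negP => lt.
  apply: (IH i) => //; lia.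
by move/(_ k k (leqnn k)).
Qed.

Lemma lex_min n (S : ('I_n -> nat) -> Prop) m0 : S m0 ->
  exists m, S m /\ forall m', S m' -> lex_le m m'.
Proof.
move=> Sm0.
have key : forall k, k <= n -> exists m, S m /\ forall m', S m' ->
   (forall j : 'I_n, j < k -> m j = m' j) \/
   exists i : 'I_n, i < k /\ (forall j : 'I_n, j < i -> m j = m' j) /\ m i < m' i.
  elim=> [|k IH] hk.
    by exists m0; split => // m' _; left.
  have hkn : k < n by [].
  have [m [Sm Hm]] := IH (ltnW hk).
  pose ik : 'I_n := Ordinal hkn.
  have [v [[ms [Sms [Ems Vms]]] Hv]] := nat_min
    (fun v => exists m', S m' /\ (forall j : 'I_n, j < k -> m' j = m j) /\ m' ik = v)
    (ex_intro _ (m ik) (ex_intro _ m (conj Sm (conj (fun _ _ => erefl) erefl)))).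
  exists ms; split => // m' Sm'.
  case: (Hm m' Sm') => [Hag|[i [hi [Hi Hlt]]]]; last first.
    right; exists i; split; first lia.
    split; last by rewrite Ems.
    by move=> j hj; rewrite Ems ?Hi //; lia.
    have := Hv (m' ik) (ex_intro _ m' (conj Sm' (conj (fun j hj => esym (Hag j hj)) erefl))).
  rewrite -Vms leq_eqVlt => /orP [/eqP Eq|Lt].
    left => j hj; case: (ltngtP j k) => hjk.
    - by rewrite Ems // Hag.
    - lia.
    - by have -> : j = ik by apply: val_inj.
  right; exists ik; split => //; split => // j hj.
  by rewrite Ems // Hag.
have [m [Sm Hm]] := key n (leqnn n).
exists m; split => // m' Sm'.
case: (Hm m' Sm') => [H|[i [_ Hi]]]; last by right; exists i.
by left => j; apply: H.
Qed.

Fixpoint code (b : nat) (s : seq nat) : nat :=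
  if s is d :: t then d * b ^ size t + code b t else 0.

Lemma code_lt b s : all (fun d => d < b) s -> code b s < b ^ size s.
Proof.
elim: s => [|d t IH] /=; first by rewrite expn0.
move/andP=> [hd ht]; have := IH ht; rewrite expnS.
set B := b ^ size t => h. nia.
Qed.

Lemma code_swap b u v z q : v < u -> z < b -> all (fun d => d < b) q ->
  code b (v :: z :: q) < code b (u :: v :: q).
Proof.
move=> hvu hz hq /=; have := @code_lt b q hq; rewrite expnS.
set B := b ^ size q => h.
have h1 : z.+1 * B <= b * B by rewrite leq_mul2r hz orbT.
have h2 : v.+1 * (b * B) <= u * (b * B) by rewrite leq_mul2r hvu orbT.
rewrite mulSn in h1; rewrite mulSn in h2; lia.
Qed.

Lemma code_cat b p s s' : size s = size s' -> code b s < code b s' ->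
  code b (p ++ s) < code b (p ++ s').
Proof.
move=> hs hc; elim: p => [//|d p IH] /=.
rewrite !size_cat hs; lia.
Qed.

Lemma blocks_sorted (c : nat -> nat) (l : seq nat) : sorted leq l ->
  sorted leq (flatten [seq nseq (c k) k | k <- l]).
Proof.
rewrite !(sorted_pairwise leq_trans).
elim: l => [//|a l IH] /= /andP [ha hl].
rewrite pairwise_cat IH // andbT; apply/andP; split.
  apply/allrelP => y z; rewrite mem_nseq => /andP [_ /eqP ->].
  move/flattenP => [s /mapP [k hk ->]]; rewrite mem_nseq => /andP [_ /eqP ->].
  exact: (allP ha).
by elim: (c a) => [//|k IHk] /=; rewrite IHk andbT; apply/allP => y; rewrite mem_nseq => /andP [_ /eqP ->].
Qed.

Lemma count_blocks (P : pred nat) N s : all (fun k => k < N) s ->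
  count P s = sumn [seq count P (nseq (count_mem k s) k) | k <- iota 0 N].
Proof.
elim: s => [|y s IH] /=.
  by rewrite sumnE big_map big1 // => k _; rewrite count_nseq muln0.
move/andP=> [hy hs]; rewrite IH // !sumnE !big_map.
under eq_bigr do rewrite count_nseq.
rewrite [RHS](eq_bigr (fun j => P j * (y == j) + P j * count_mem j s)); last first.
  by move=> j _; rewrite count_nseq mulnDr.
rewrite big_split /=; congr (_ + _).
rewrite (bigD1_seq y) ?mem_iota ?iota_uniq //= eqxx muln1 big1 ?addn0 // => k.
by rewrite eq_sym => /negPf ->; rewrite muln0.
Qed.

Lemma sorted_blocks N s : sorted leq s -> all (fun k => k < N) s ->
  s = flatten [seq nseq (count_mem k s) k | k <- iota 0 N].
Proof.
move=> hs hN; apply: (sorted_eq leq_trans anti_leq) => //.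
  exact/blocks_sorted/iota_sorted.
apply/permP => P; rewrite (@count_blocks P N s hN) count_flatten -map_comp //.
Qed.

Lemma sorted_nodesc (T : Type) (f : T -> nat) (w : seq T) :
  (forall p y1 y2 q, w = p ++ y1 :: y2 :: q -> f y1 <= f y2) -> sorted leq (map f w).
Proof.
elim: w => [//|y w IH] H /=.
case: w IH H => [//|y' w] IH H /=.
rewrite (H [::] y y' w erefl) /=.
apply: (IH) => p y1 y2 q E; apply: (H (y :: p)); by rewrite E.
Qed.
Set Implicit Arguments.
Unset Strict Implicit.

Lemma eqM_ctx X (R : seq X -> seq X -> Prop) p q a b :
  eqM R a b -> eqM R (p ++ a ++ q) (p ++ b ++ q).
Proof.
elim=> [p0 u v q0 H|a0|a0 b0 _ IH|a0 b0 c0 _ IH1 _ IH2].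
- have -> : p ++ (p0 ++ u ++ q0) ++ q = (p ++ p0) ++ u ++ (q0 ++ q) by rewrite !catA.
  have -> : p ++ (p0 ++ v ++ q0) ++ q = (p ++ p0) ++ v ++ (q0 ++ q) by rewrite !catA.
  exact: eqM_rel.
- exact: eqM_refl.
- exact: eqM_sym.
- exact: eqM_trans IH2.
Qed.

Lemma eqM_cat X (R : seq X -> seq X -> Prop) a b c d :
  eqM R a b -> eqM R c d -> eqM R (a ++ c) (b ++ d).
Proof.
move=> H1 H2; apply: (@eqM_trans _ _ _ (b ++ c)).
  by have := eqM_ctx [::] c H1; rewrite /= .
by have := eqM_ctx b [::] H2; rewrite !cats0.
Qed.

Fixpoint rep X (k : nat) (w : seq X) : seq X :=
  if k is k'.+1 then w ++ rep k' w else [::].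

Lemma L0 X (R : seq X -> seq X -> Prop) w : BF R -> eqM R w [::] -> w = [::].
Proof.
move=> hbf H; case: w H => [//|y w'] H; exfalso.
have hrep : forall k, eqM R (rep k (y :: w')) [::].
  elim=> [|k IH] /=; first exact: eqM_refl.
  by have := eqM_cat H IH.
have hsz : forall k, size (rep k (y :: w')) >= k.
  elim=> [//|k IH] /=; rewrite size_cat /=; lia.
have [N HN] := hbf [::].
have := HN _ (ex_intro _ _ (conj (hrep N.+1) erefl)).
have := hsz N.+1; lia.
Qed.

Lemma in_cat_or X (x : X) a b : List.In x (a ++ b) -> List.In x a \/ List.In x b.
Proof. elim: a => [|y a IH] /=; [by right | by case=> [->|/IH]; tauto]. Qed.

Lemma in_split_cat X (x : X) w : List.In x w -> exists l1 l2, w = l1 ++ x :: l2.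
Proof.
elim: w => [//|y w IH] /= [->|/IH [l1 [l2 ->]]]; first by exists [::], w.
by exists (y :: l1), l2.
Qed.

Lemma L_in X (R : seq X -> seq X -> Prop) x w :
  irredundant R -> eqM R [:: x] w -> List.In x w.
Proof.
move=> hirr H; apply: NNPP => Hn.
apply: (hirr (fun y => y <> x)); first by exists x.
elim=> [|y a [b [Hb Hab]]].
  by exists [::]; split => //; exact: eqM_refl.
case: (classic (y = x)) => [Eyx|Hyx].
  exists (w ++ b); split.
    move=> z Hz0; have [Hz|Hz] := in_cat_or Hz0; last exact: Hb.
    by move=> Ezx; apply: Hn; rewrite -Ezx.
  by rewrite Eyx; have := eqM_cat H Hab.
exists (y :: b); split.
  by move=> z /= [<-|Hz] //; exact: Hb.
by have := eqM_cat (eqM_refl R [:: y]) Hab.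
Qed.

Lemma atom X (R : seq X -> seq X -> Prop) y b c :
  irredundant R -> normalizing R -> cancellative R -> BF R ->
  eqM R [:: y] (b ++ c) -> b = [::] \/ c = [::].
Proof.
move=> hirr hnorm hcanc hbf H.
case: b H => [|b0 b'] H; first by left.
case: c H => [|c0 c'] H; first by right.
exfalso.
have [_ H2] := hnorm [:: y].
have [Hin|Hin] := in_cat_or (L_in hirr H); move: Hin.
- move=> Hin; have [l1 [l2 E]] := in_split_cat Hin.
  have [d Hd] := H2 l1.
  have : eqM R ([:: y] ++ [::]) ([:: y] ++ (d ++ l2 ++ c0 :: c')).
    rewrite cats0; apply: (eqM_trans H); rewrite E.
    have -> : (l1 ++ y :: l2) ++ c0 :: c' = (l1 ++ [:: y]) ++ (l2 ++ c0 :: c') by rewrite -!catA.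
    have -> : [:: y] ++ d ++ l2 ++ c0 :: c' = ([:: y] ++ d) ++ (l2 ++ c0 :: c') by rewrite -!catA.
    exact: eqM_cat Hd (eqM_refl _ _).
  move/(proj1 (hcanc _ _ _))/eqM_sym/(L0 hbf)/(congr1 size).
  rewrite !size_cat /=; lia.
- move=> Hin; have [l1 [l2 E]] := in_split_cat Hin.
  have [d Hd] := H2 ((b0 :: b') ++ l1).
  have : eqM R ([:: y] ++ [::]) ([:: y] ++ (d ++ l2)).
    rewrite cats0; apply: (eqM_trans H); rewrite E.
    have -> : (b0 :: b') ++ l1 ++ y :: l2 = (((b0 :: b') ++ l1) ++ [:: y]) ++ l2 by rewrite -!catA.
    have -> : [:: y] ++ d ++ l2 = ([:: y] ++ d) ++ l2 by rewrite -!catA.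
    exact: eqM_cat Hd (eqM_refl _ _).
  move/(proj1 (hcanc _ _ _))/eqM_sym/(L0 hbf) => Edl.
  have Ed : d = [::] by case: d Edl Hd.
  rewrite Ed in Hd.
  have : eqM R (((b0 :: b') ++ l1) ++ [:: y]) ([::] ++ [:: y]) by rewrite cats0 in Hd.
  by move/(proj2 (hcanc _ _ _))/(L0 hbf).
Qed.

Lemma nonempty_neq X (R : seq X -> seq X -> Prop) y : BF R -> ~ eqM R [:: y] [::].
Proof. by move=> hbf /(L0 hbf). Qed.

Lemma part1 X (R : seq X -> seq X -> Prop) :
  irredundant R -> normalizing R -> cancellative R -> BF R ->
  forall x y : X, exists z : X, eqM R [:: x; y] [:: z; x].
Proof.
move=> hirr hnorm hcanc hbf x y.
have [H1 H2] := hnorm [:: x].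
have [c Hc] := H1 [:: y].
case: c Hc => [|c1 c2] Hc.
  have : eqM R ([:: x] ++ [:: y]) ([:: x] ++ [::]) by rewrite cats0.
  by move/(proj1 (hcanc _ _ _))/(nonempty_neq hbf).
case: c2 Hc => [|c2' c2''] Hc; first by exists c1.
exfalso.
have [d1 Hd1] := H2 [:: c1].
have [d2 Hd2] := H2 (c2' :: c2'').
have : eqM R ([:: x] ++ [:: y]) ([:: x] ++ (d1 ++ d2)).
  apply: (eqM_trans Hc).
  apply: (@eqM_trans _ _ _ ([:: c1] ++ ([:: x] ++ d2))).
    by have := eqM_cat (eqM_refl R [:: c1]) Hd2.
  have -> : [:: x] ++ d1 ++ d2 = ([:: x] ++ d1) ++ d2 by [].
  have -> : [:: c1] ++ [:: x] ++ d2 = ([:: c1] ++ [:: x]) ++ d2 by [].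
  exact: eqM_cat Hd1 (eqM_refl _ _).
move/(proj1 (hcanc _ _ _)) => Hy.
have [Ed|Ed] := atom hirr hnorm hcanc hbf Hy.
  rewrite Ed in Hd1.
  have : eqM R ([:: c1] ++ [:: x]) ([::] ++ [:: x]) by rewrite cats0 in Hd1.
  by move/(proj2 (hcanc _ _ _))/(nonempty_neq hbf).
rewrite Ed in Hd2.
have : eqM R ((c2' :: c2'') ++ [:: x]) ([::] ++ [:: x]) by rewrite cats0 in Hd2.
by move/(proj2 (hcanc _ _ _))/(L0 hbf).
Qed.

Lemma part1' X (R : seq X -> seq X -> Prop) :
  irredundant R -> normalizing R -> cancellative R -> BF R ->
  forall x y : X, exists z : X, eqM R [:: y; x] [:: x; z].
Proof.
move=> hirr hnorm hcanc hbf x y.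
have [H1 H2] := hnorm [:: x].
have [d Hd] := H2 [:: y].
case: d Hd => [|d1 d2] Hd.
  have : eqM R ([:: y] ++ [:: x]) ([::] ++ [:: x]) by rewrite cats0 in Hd.
  by move/(proj2 (hcanc _ _ _))/(nonempty_neq hbf).
case: d2 Hd => [|d2' d2''] Hd; first by exists d1.
exfalso.
have [e1 He1] := H1 [:: d1].
have [e2 He2] := H1 (d2' :: d2'').
have : eqM R ([:: y] ++ [:: x]) ((e1 ++ e2) ++ [:: x]).
  apply: (eqM_trans Hd).
  apply: (@eqM_trans _ _ _ ((e1 ++ [:: x]) ++ (d2' :: d2''))).
    by have := eqM_cat He1 (eqM_refl R (d2' :: d2'')).
  rewrite -!catA; exact: eqM_cat (eqM_refl _ _) He2.
move/(proj2 (hcanc _ _ _)) => Hy.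
have [Ee|Ee] := atom hirr hnorm hcanc hbf Hy.
  rewrite Ee in He1.
  have : eqM R ([:: x] ++ [:: d1]) ([:: x] ++ [::]) by rewrite cats0.
  by move/(proj1 (hcanc _ _ _))/(nonempty_neq hbf).
rewrite Ee in He2.
have : eqM R ([:: x] ++ (d2' :: d2'')) ([:: x] ++ [::]) by rewrite cats0.
by move/(proj1 (hcanc _ _ _))/(L0 hbf).
Qed.

Lemma size_monoword X n (x : 'I_n -> X) m : size (monoword x m) = \sum_(i < n) m i.
Proof.
rewrite /monoword size_flatten /shape -map_comp sumnE big_map big_enum /=.
by apply: eq_bigr => i _; rewrite size_nseq.
Qed.

Unset Implicit Arguments.
Set Strict Implicit.

Theorem lemma5p3 (X : Type) (R : seq X -> seq X -> Prop) :
  irredundant R -> normalizing R -> cancellative R -> BF R ->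
  (forall x y : X, exists z : X, eqM R [:: x; y] [:: z; x]) /\
  (forall (n : nat) (x : 'I_n -> X), (0 < n)%N -> bijective x ->
     forall a : seq X, exists nu : seq X,
       eqM R a nu /\ size a = size nu /\
       exists m : 'I_n -> nat, nu = monoword x m /\
         forall m' : 'I_n -> nat,
           eqM R a (monoword x m') -> \sum_(i < n) m' i = size a -> lex_le m m').
Proof.
move=> hirr hnorm hcanc hbf; split; first exact: part1.
move=> n x n0 [g xg gx] a.
pose f (y : X) : nat := val (g y).
have allf : forall l, all (fun d => d < n) (map f l).
  by elim=> //= y l ->; rewrite andbT; exact: ltn_ord.
have [k0 [[w0 [Hw0 [Sw0 Cw0]]] Hmin]] := nat_min _
  (ex_intro (fun k => exists w, eqM R a w /\ size w = size a /\ code n (map f w) = k)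
     _ (ex_intro _ a (conj (eqM_refl R a) (conj erefl erefl)))).
have Hs : sorted leq (map f w0).
  apply: sorted_nodesc => p y1 y2 q E; rewrite leqNgt; apply/negP => lt.
  have [z Hz] := part1' hirr hnorm hcanc hbf y2 y1.
  have := Hmin (code n (map f (p ++ y2 :: z :: q))).
  have Hall := allf q.
  have Hlt : code n (map f (p ++ y2 :: z :: q)) < k0.
    rewrite -Cw0 E !map_cat /=; apply: code_cat; first by rewrite /= !size_map.
    by apply: code_swap => //; exact: ltn_ord.
  move=> H; suff Hex : exists w, eqM R a w /\ size w = size a /\
      code n (map f w) = code n (map f (p ++ y2 :: z :: q)).
    by move: (H Hex); rewrite leqNgt Hlt.
  exists (p ++ y2 :: z :: q); split; last split => //.
    apply: (eqM_trans Hw0); rewrite E; exact: (eqM_ctx p q Hz).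
  by rewrite -Sw0 E !size_cat.
pose h (k : nat) : X := x (insubd (Ordinal n0) k).
have hf : forall y, h (f y) = y by move=> y; rewrite /h /f valKd gx.
pose s := map f w0.
have Ew0 : w0 = map h s.
  by rewrite /s -map_comp (eq_map (g := id)) ?map_id // => y /=; rewrite hf.
pose m (i : 'I_n) := count_mem (val i) s.
have Hmono : w0 = monoword x m.
  rewrite Ew0 /monoword.
  have Hall := allf w0.
  rewrite {1}(@sorted_blocks n s Hs Hall) -val_enum_ord -map_comp map_flatten -map_comp.
  congr flatten; apply: eq_map => i /=; rewrite map_nseq /h valKd //.
have Sm : eqM R a (monoword x m) /\ \sum_(i < n) m i = size a.
  by rewrite -Hmono -(size_monoword x) -Hmono Sw0.
have [mm [[Smm Summ] Hmm]] := @lex_min n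
  (fun m' => eqM R a (monoword x m') /\ \sum_(i < n) m' i = size a) m Sm.
exists (monoword x mm); split => //; split; first by rewrite size_monoword Summ.
exists mm; split => // m' H1 H2; exact: Hmm.
Qed.

Print Assumptions lemma5p3.
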